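(* With all notation as in the context, for every right coset $\tau\in G\backslash H$ and every $\alpha\in Q$ one has $$\gamma_1(\alpha\cdot\tau)=m(\alpha)\cdot\gamma_1(\tau).$$ In particular, the action of $Q$ on the blue $L$ cosets $\mathscr{O}_1$, and on the red $L$ cosets $\mathscr{O}_2$, is isomorphic (via $m$ and $\gamma_1$) to the action of $H_1$ on $G_L\backslash H_1$, and the action of $Q$ on the $J$ cosets $\mathscr{O}_3$ is isomorphic (via $m$ and $\gamma_1$) to the action of $H_1$ on $G_J\backslash H_1$.
   Context: Group $H$ side. Let $W=\{(a,b,c,d,e,f,g,h)^T\in\mathbb{C}^8: 2+3a=b+c+d+e+f+g+h\}$; a transposition $(ij)$ denotes the permutation matrix swapping coordinates $i,j$. Let $X\in GL(8,\mathbb{C})$ be the matrix with rows $(\tfrac12,\tfrac12,-\tfrac12,-\tfrac12,-\tfrac12,\tfrac12,\tfrac12,\tfrac12)$, $e_2$, $(-\tfrac12,\tfrac12,\tfrac12,-\tfrac12,-\tfrac12,\tfrac12,\tfrac12,\tfrac12)$, $(-\tfrac12,\tfrac12,-\tfrac12,\tfrac12,-\tfrac12,\tfrac12,\tfrac12,\tfrac12)$, $(-\tfrac12,\tfrac12,-\tfrac12,-\tfrac12,\tfrac12,\tfrac12,\tfrac12,\tfrac12)$, $e_6,e_7,e_8$, and $Y$ the matrix with rows $(-1,2,0,\dots,0)$, $(-1,1,1,0,\dots,0)$, $(0,1,0,\dots,0)$, and $-e_1+e_2+e_r$ ($r=4,\dots,8$). Let $H=\langle(23),(34),(45),(56),(67),(78),X,Y\rangle\cong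 W(E_7)$ with Coxeter generators $s_1=Y(23)$, $s_2=(34)$, $s_3=(45)$, $s_4=(56)$, $s_5=(67)$, $s_6=(78)$, $s_{3'}=X$; $G=\langle s_2,\dots,s_6,s_{3'}\rangle$; $Q=\langle s_1,\dots,s_5,s_{3'}\rangle$. For $\vec w\in W$ put $x_0=b,x_1=h,x_2=g,x_3=f,x_4=e,x_5=d,x_6=c,x_7=a$. The coset $G\alpha$ is determined by the second entry of $\alpha\vec w$ (an affine function of $\vec w$); $v(i,j)$ ($0\le i<j\le7$) is the coset with second entry $x_i+x_j-x_7$, and $-v(i,j)$ the one with $1+x_7-x_i-x_j$ (these are all 56 cosets). Let $\mathscr{O}_1=\{v(0,j),-v(1,j):2\le j\le7\}$ (blue $L$ cosets), $\mathscr{O}_2=\{v(1,j),-v(0,j):2\le j\le 7\}$ (red $L$ cosets), $\mathscr{O}_3=\{\pm v(0,1)\}\cup\{\pm v(i,j):2\le i<j\le7\}$ ($J$ cosets). Group $H_1$ side. Let $V=\{(A,B,C,D,E,F,G)^T\in\mathbb{C}^7:E+F+G-A-B-C-D=1\}$; let $X_1$ have rows $e_1$, $-e_3+e_5$, $-e_2+e_5$, $e_4$, $e_5$, $-e_2-e_3+e_5+e_6$, $-e_2-e_3+e_5+e_7$ (so $X_1\vec x=(A,E-C,E-B,D,E,1+A+D-G,1+A+D-F)^T$ on $V$). Let $H_1=\langle(12),(23),(34),(56),(67),X_1\rangle\cong W(D_6)$ with Coxeter generators $a_1=(23),a_2=(34),a_3=X_1,a_4=(56),a_5=(67),a_{1'}=(14)$,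 $G_J=\langle(23),(34),(56),(67),X_1\rangle$, $G_L=\langle(12),(23),(34),(67),(57)X_1(57)\rangle$. Labels of $G_J\backslash H_1$: the first coordinate of $\alpha\vec x$ ($\alpha\in H_1$) determines $G_J\alpha$; with $(A_0,A_1,A_2,A_3)=(A,B,C,D)$, $(E_0,E_1,E_2,E_3)=(1,E,F,G)$, it equals $1+A_r-E_q$ or $E_q-A_r$ ($0\le r,q\le3$). To the first case assign the sign string $b_rb_q$ (concatenation), where $b_0={+}{+}{+}$, $b_1={+}{-}{-}$, $b_2={-}{+}{-}$, $b_3={-}{-}{+}$; to the second case assign the negation of that string. This identifies $G_J\backslash H_1$ with the 32 length-6 sign strings with evenly many minus signs. Labels of $G_L\backslash H_1$: the coset labeled $\sigma\in\{1,\dots,6,\overline1,\dots,\overline6\}$ is $G_L\beta_\sigma$ where $\beta_\sigma\vec x=u_\sigma$ on $V$ with $u_6=(A,B,C,D,G,F,E)$, $u_5=(A,B,C,D,F,E,G)$, $u_4=(A,B,C,D,E,F,G)$, $u_3=(A,1+A-E,1+A-F,1+A-G,1+A-D,1+A-B,1+A-C)$, $u_2=(A,1+A-E,1+A-F,1+A-G,1+A-C,1+A-B,1+A-D)$, $u_1=(A,1+A-E,1+A-F,1+A-G,1+A-B,1+A-C,1+A-D)$, $u_{\overline6}=(1-A,1-B,1-C,1-D,2-G,2-F,2-E)$, $u_{\overline5}=(1-A,1-B,1-C,1-D,2-F,2-E,2-G)$, $u_{\overline4}=(1-A,1-B,1-C,1-D,2-E,2-F,2-G)$, $u_{\overline3}=(1-A,E-A,F-A,G-A,1+D-A,1+B-A,1+C-A)$,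 $u_{\overline2}=(1-A,E-A,F-A,G-A,1+C-A,1+B-A,1+D-A)$, $u_{\overline1}=(1-A,E-A,F-A,G-A,1+B-A,1+C-A,1+D-A)$. Maps. $m:Q\to H_1$ is the group isomorphism with $m(s_k)=a_{6-k}$ ($1\le k\le5$), $m(s_{3'})=a_{1'}$. The map $\gamma_1:G\backslash H\to (G_L\backslash H_1)\cup(G_J\backslash H_1)$ is: $\gamma_1(v(0,j))=\gamma_1(v(1,j))=j-1$ and $\gamma_1(-v(1,j))=\gamma_1(-v(0,j))=\overline{j-1}$ for $2\le j\le 7$; $\gamma_1(v(0,1))={+}{+}{+}{+}{+}{+}$, $\gamma_1(-v(0,1))={-}{-}{-}{-}{-}{-}$; for $2\le i<j\le7$, $\gamma_1(v(i,j))$ is the string with plus signs in positions $i-1$ and $j-1$ and minus signs elsewhere, and $\gamma_1(-v(i,j))$ is its negation. Actions: a group acts on right cosets of a subgroup by right multiplication, written $\alpha\cdot(K\beta)=K\beta\alpha^{-1}$. *)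

(* Defs.v *)
From HB Require Import structures.
From mathcomp Require Import all_boot all_order all_algebra.
Set Implicit Arguments. Unset Strict Implicit. Unset Printing Implicit Defensive.
Import GRing.Theory Num.Theory.
Local Open Scope ring_scope.

Section Defs.
Variable F : numClosedFieldType.

Inductive gen n (S : seq 'M[F]_n.+1) : 'M[F]_n.+1 -> Prop :=
| gen1 : gen S 1
| genM x g : x \in S -> gen S g -> gen S (x * g)
| genV x g : x \in S -> gen S g -> gen S (x^-1 * g).

Definition mxl n (s : seq (seq int)) : 'M[F]_n :=
  \matrix_(i, j) ((nth [::] s i)`_j)%:~R.

Definition trp n (i j : nat) : 'M[F]_n.+1 := tperm_mx (inord i) (inord j).

(* Group H side (8x8).  Coordinates (a,b,c,d,e,f,g,h) = indices 0..7.   *)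
Definition Xm : 'M[F]_8 := 2^-1 *: mxl 8
  [:: [::  1; 1;-1;-1;-1; 1; 1; 1];
      [::  0; 2; 0; 0; 0; 0; 0; 0];
      [:: -1; 1; 1;-1;-1; 1; 1; 1];
      [:: -1; 1;-1; 1;-1; 1; 1; 1];
      [:: -1; 1;-1;-1; 1; 1; 1; 1];
      [::  0; 0; 0; 0; 0; 2; 0; 0];
      [::  0; 0; 0; 0; 0; 0; 2; 0];
      [::  0; 0; 0; 0; 0; 0; 0; 2]].

Definition Ym : 'M[F]_8 := mxl 8
  [:: [:: -1; 2; 0; 0; 0; 0; 0; 0];
      [:: -1; 1; 1; 0; 0; 0; 0; 0];
      [::  0; 1; 0; 0; 0; 0; 0; 0];
      [:: -1; 1; 0; 1; 0; 0; 0; 0];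
      [:: -1; 1; 0; 0; 1; 0; 0; 0];
      [:: -1; 1; 0; 0; 0; 1; 0; 0];
      [:: -1; 1; 0; 0; 0; 0; 1; 0];
      [:: -1; 1; 0; 0; 0; 0; 0; 1]].

(* (23) = trp 1 2, (34) = trp 2 3, ..., (78) = trp 6 7 *)
Definition s1 : 'M[F]_8 := Ym * trp 7 1 2.
Definition s2 : 'M[F]_8 := trp 7 2 3.
Definition s3 : 'M[F]_8 := trp 7 3 4.
Definition s4 : 'M[F]_8 := trp 7 4 5.
Definition s5 : 'M[F]_8 := trp 7 5 6.
Definition s6 : 'M[F]_8 := trp 7 6 7.
Definition s3' : 'M[F]_8 := Xm.

Definition Hgrp := gen [:: trp 7 1 2; trp 7 2 3; trp 7 3 4; trp 7 4 5;
                           trp 7 5 6; trp 7 6 7; Xm; Ym].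
Definition Ggrp := gen [:: s2; s3; s4; s5; s6; s3'].
Definition Qgrp := gen [:: s1; s2; s3; s4; s5; s3'].

Definition inW (w : 'cV[F]_8) : Prop :=
  2 + 3 * w (inord 0) 0 = \sum_(1 <= k < 8) w (inord k) 0.

(* x_0 = b, x_1 = h, x_2 = g, x_3 = f, x_4 = e, x_5 = d, x_6 = c, x_7 = a *)
Definition xc (w : 'cV[F]_8) (k : nat) : F :=
  w (inord (nth 0%N [:: 1; 7; 6; 5; 4; 3; 2; 0]%N k)) 0.

(* labels of G\H: (true,i,j) = v(i,j), (false,i,j) = -v(i,j), 0<=i<j<=7 *)
Definition lab := (bool * nat * nat)%type.
Definition lab_ok (l : lab) : bool := let '(_, i, j) := l in (i < j < 8)%N.

Definition labval (l : lab) (w : 'cV[F]_8) : F :=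
  let '(sg, i, j) := l in
  if sg then xc w i + xc w j - xc w 7 else 1 + xc w 7 - xc w i - xc w j.

(* the coset G beta is labelled l: second entry of beta w is the affine
   function of l, for all w in W *)
Definition labG (beta : 'M[F]_8) (l : lab) : Prop :=
  lab_ok l /\ forall w, inW w -> (beta *m w) (inord 1) 0 = labval l w.

Definition inO1 (l : lab) : bool := let '(sg, i, j) := l in
  [&& (2 <= j <= 7)%N & (sg && (i == 0%N)) || (~~ sg && (i == 1%N))].
Definition inO2 (l : lab) : bool := let '(sg, i, j) := l in
  [&& (2 <= j <= 7)%N & (sg && (i == 1%N)) || (~~ sg && (i == 0%N))].
Definition inO3 (l : lab) : bool := let '(sg, i, j) := l in
  ((i == 0%N) && (j == 1%N)) || (2 <= i)%N.

(* Group H1 side (7x7). Coordinates (A,B,C,D,E,F,G) = indices 0..6.    *)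
Definition c7 (x : 'cV[F]_7) (k : nat) : F := x (inord k) 0.

Definition inV (x : 'cV[F]_7) : Prop :=
  c7 x 4 + c7 x 5 + c7 x 6 - c7 x 0 - c7 x 1 - c7 x 2 - c7 x 3 = 1.

Definition X1 : 'M[F]_7 := mxl 7
  [:: [::  1; 0; 0; 0; 0; 0; 0];
      [::  0; 0;-1; 0; 1; 0; 0];
      [::  0;-1; 0; 0; 1; 0; 0];
      [::  0; 0; 0; 1; 0; 0; 0];
      [::  0; 0; 0; 0; 1; 0; 0];
      [::  0;-1;-1; 0; 1; 1; 0];
      [::  0;-1;-1; 0; 1; 0; 1]].

Definition a1 : 'M[F]_7 := trp 6 1 2.
Definition a2 : 'M[F]_7 := trp 6 2 3.
Definition a3 : 'M[F]_7 := X1.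
Definition a4 : 'M[F]_7 := trp 6 4 5.
Definition a5 : 'M[F]_7 := trp 6 5 6.
Definition a1' : 'M[F]_7 := trp 6 0 3.

Definition H1grp := gen [:: trp 6 0 1; trp 6 1 2; trp 6 2 3; trp 6 4 5;
                            trp 6 5 6; X1].
Definition GJgrp := gen [:: trp 6 1 2; trp 6 2 3; trp 6 4 5; trp 6 5 6; X1].
Definition GLgrp := gen [:: trp 6 0 1; trp 6 1 2; trp 6 2 3; trp 6 5 6;
                            trp 6 4 6 * X1 * trp 6 4 6].

(* u_sigma, sigma = (bar, k): bar = false is k, bar = true is \overline k *)
Definition uL (bar : bool) (k : nat) (x : 'cV[F]_7) : seq F :=
  let A := c7 x 0 in let B := c7 x 1 in let C := c7 x 2 in let D := c7 x 3 in
  let E := c7 x 4 in let Fx := c7 x 5 in let G := c7 x 6 in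
  if ~~ bar then
    match k with
    | 6 => [:: A; B; C; D; G; Fx; E]
    | 5 => [:: A; B; C; D; Fx; E; G]
    | 4 => [:: A; B; C; D; E; Fx; G]
    | 3 => [:: A; 1 + A - E; 1 + A - Fx; 1 + A - G; 1 + A - D; 1 + A - B; 1 + A - C]
    | 2 => [:: A; 1 + A - E; 1 + A - Fx; 1 + A - G; 1 + A - C; 1 + A - B; 1 + A - D]
    | _ => [:: A; 1 + A - E; 1 + A - Fx; 1 + A - G; 1 + A - B; 1 + A - C; 1 + A - D]
    end
  else
    match k with
    | 6 => [:: 1 - A; 1 - B; 1 - C; 1 - D; 2 - G; 2 - Fx; 2 - E]
    | 5 => [:: 1 - A; 1 - B; 1 - C; 1 - D; 2 - Fx; 2 - E; 2 - G]
    | 4 => [:: 1 - A; 1 - B; 1 - C; 1 - D; 2 - E; 2 - Fx; 2 - G]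
    | 3 => [:: 1 - A; E - A; Fx - A; G - A; 1 + D - A; 1 + B - A; 1 + C - A]
    | 2 => [:: 1 - A; E - A; Fx - A; G - A; 1 + C - A; 1 + B - A; 1 + D - A]
    | _ => [:: 1 - A; E - A; Fx - A; G - A; 1 + B - A; 1 + C - A; 1 + D - A]
    end.

(* delta lies in the coset G_L beta_sigma, where beta_sigma in H1 acts on V
   by u_sigma *)
Definition inGL (delta : 'M[F]_7) (bar : bool) (k : nat) : Prop :=
  (1 <= k <= 6)%N /\
  exists beta, H1grp beta /\
    (forall x, inV x -> forall i : 'I_7, (beta *m x) i 0 = nth 0 (uL bar k x) i) /\
    GLgrp (delta * beta^-1).

(* sign strings: true = '+', false = '-' *)
Definition bstr (r : nat) : seq bool :=
  match r with
  | 0 => [:: true; true; true]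
  | 1 => [:: true; false; false]
  | 2 => [:: false; true; false]
  | _ => [:: false; false; true]
  end.

Definition Acoord (x : 'cV[F]_7) (r : nat) : F := c7 x r.
Definition Ecoord (x : 'cV[F]_7) (q : nat) : F :=
  if q == 0%N then 1 else c7 x (q + 3).

Definition inGJ (delta : 'M[F]_7) (s : seq bool) : Prop :=
  exists r q (sg : bool), [/\ (r < 4)%N, (q < 4)%N,
    s = (if sg then bstr r ++ bstr q else map negb (bstr r ++ bstr q)) &
    forall x, inV x -> (delta *m x) (inord 0) 0 =
      (if sg then 1 + Acoord x r - Ecoord x q else Ecoord x q - Acoord x r)].

(* labels of (G_L\H1) + (G_J\H1) *)
Definition tlab := ((bool * nat) + seq bool)%type.

Definition inT (delta : 'M[F]_7) (t : tlab) : Prop :=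
  match t with
  | inl (bar, k) => inGL delta bar k
  | inr s => inGJ delta s
  end.

Definition validL (t : bool * nat) : bool := (1 <= t.2 <= 6)%N.
Definition validJ (s : seq bool) : bool := (size s == 6%N) && ~~ odd (count negb s).

End Defs.

Definition gamma1 (l : lab) : tlab :=
  let '(sg, i, j) := l in
  if (i == 0%N) && (j == 1%N) then inr (nseq 6 sg)
  else if (i <= 1)%N then inl (~~ sg, j.-1)
  else inr [seq (if (k == i.-1) || (k == j.-1) then sg else ~~ sg) | k <- iota 1 6].

(* Main.v *)
Require Import Defs.
From mathcomp Require Import all_boot all_order all_algebra.
Import GRing.Theory Num.Theory.
Local Open Scope ring_scope.
From mathcomp Require Import ring zify.
Set Implicit Arguments. Unset Strict Implicit. Unset Printing Implicit Defensive.

Definition Tl N (i j : nat) : seq (seq int) := mkseq (fun r => mkseq (fun c =>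
     ((if r == i then j else if r == j then i else r) == c)%:Z) N) N.

Definition isum (n : nat) (g : nat -> int) : int :=
  foldr (fun k acc => g k + acc) 0 (iota 0 n).
Definition vecmat n (f : seq int) (M : seq (seq int)) : seq int :=
  mkseq (fun j => isum n (fun k => f`_k * (nth [::] M k)`_j)) n.
Definition matmul n (A B : seq (seq int)) : seq (seq int) :=
  mkseq (fun i => vecmat n (nth [::] A i) B) n.
Definition vadd n (f g : seq int) := mkseq (fun k => f`_k + g`_k) n.
Definition vsc n (c : int) (f : seq int) := mkseq (fun k => c * f`_k) n.
Definition unitv n (p : nat) : seq int := mkseq (fun k => (k == p)%:Z) n.
Definition idl n : seq (seq int) := mkseq (fun i => unitv n i) n.

Lemma isumE n g : isum n g = \sum_(k < n) g k.
Proof.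
rewrite /isum -(big_mkord xpredT g) /index_iota subn0.
by elim: (iota 0 n) => [|a s IH] /=; rewrite ?big_nil ?big_cons ?IH.
Qed.

Section Fld.
Variable F : numClosedFieldType.

Definition lin n (f : seq int) (w : 'cV[F]_n) : F := \sum_(k < n) (f`_k)%:~R * w k 0.
Definition aev n (c : int) f (w : 'cV[F]_n) : F := c%:~R + lin f w.

Lemma mxlM n A B : mxl F n A *m mxl F n B = mxl F n (matmul n A B).
Proof.
apply/matrixP => i j; rewrite !mxE /matmul nth_mkseq // /vecmat nth_mkseq //.
rewrite isumE rmorph_sum /=; apply: eq_bigr => k _.
by rewrite !mxE intrM.
Qed.

Lemma lin_mx n f M w : lin f (mxl F n M *m w) = lin (vecmat n f M) w.
Proof.
rewrite /lin /vecmat [RHS](eq_bigr (fun j : 'I_n => \sum_(k < n)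
  (f`_k)%:~R * ((nth [::] M k)`_j)%:~R * w j 0)); last first.
  by move=> j _; rewrite nth_mkseq // isumE rmorph_sum /= mulr_suml;
     apply: eq_bigr => k _; rewrite intrM.
rewrite exchange_big /=; apply: eq_bigr => k _.
rewrite !mxE mulr_sumr; apply: eq_bigr => j _.
by rewrite !mxE mulrA.
Qed.

Lemma lin_scale n f a (w : 'cV[F]_n) : lin f (a *: w) = a * lin f w.
Proof.
rewrite /lin mulr_sumr; apply: eq_bigr => k _.
by rewrite mxE mulrCA.
Qed.

Lemma lin_add n f g (w : 'cV[F]_n) : lin (vadd n f g) w = lin f w + lin g w.
Proof.
rewrite /lin -big_split; apply: eq_bigr => k _.
by rewrite /vadd nth_mkseq // intrD mulrDl.
Qed.

Lemma lin_sc n c f (w : 'cV[F]_n) : lin (vsc n c f) w = c%:~R * lin f w.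
Proof.
rewrite /lin mulr_sumr; apply: eq_bigr => k _.
by rewrite /vsc nth_mkseq // intrM mulrA.
Qed.

Lemma mxl_idl n : mxl F n.+1 (idl n.+1) = 1.
Proof.
apply/matrixP => i j; rewrite !mxE /idl nth_mkseq // /unitv nth_mkseq //.
by case: (i =P j) => [->|ne]; rewrite ?eqxx //; case: eqP => // /val_inj e; rewrite e in ne.
Qed.


Definition achk n (nf : seq int) (kap : int) (p : nat) (d : int) M
  (cf cf2 : int * seq int) : bool :=
  let g := vecmat n cf.2 M in
  let mu := (g`_p - d * cf2.2`_p) * nf`_p in
  (g == vadd n (vsc n d cf2.2) (vsc n mu nf)) && (d * cf2.1 == d * cf.1 - kap * mu).

Lemma achkP n nf kap p d M c f c2 f2 :
  d != 0 -> achk n nf kap p d M (c, f) (c2, f2) ->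
  forall w : 'cV[F]_n, aev kap nf w = 0 ->
  aev c f (((d%:~R)^-1 *: mxl F n M) *m w) = aev c2 f2 w.
Proof.
move=> d0 /andP[/eqP eg /eqP ec] w hw.
move: eg ec; set g := vecmat _ _ _; set mu := (_ * _)%R => eg ec.
rewrite /aev -scalemxAl lin_scale lin_mx -/g eg lin_add !lin_sc.
have {}hw : lin nf w = - kap%:~R by move: hw; rewrite /aev => hw; rewrite -[LHS](addKr (kap%:~R)) hw addr0.
have ec' : (c2%:~R : F) = (d%:~R)^-1 * (d%:~R * c%:~R - kap%:~R * mu%:~R).
  by rewrite -!intrM -intrB -ec intrM mulrA mulVf ?mul1r // intr_eq0.
rewrite ec' hw.
have dF : (d%:~R : F) != 0 by rewrite intr_eq0.
field.
exact: dF.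
Qed.

Lemma linE n f (w : 'cV[F]_n.+1) :
  lin f w = foldr (fun k acc => (f`_k)%:~R * w (inord k) 0 + acc) 0 (iota 0 n.+1).
Proof.
rewrite /lin (eq_bigr (fun k : 'I_n.+1 => (f`_(k : nat))%:~R * w (inord k) 0)); last first.
  by move=> k _; rewrite inord_val.
rewrite -(big_mkord xpredT (fun k => (f`_k)%:~R * w (inord k) 0)) /index_iota subn0.
by elim: (iota 0 n.+1) => [|a s IH]; rewrite ?big_nil ?big_cons ?IH.
Qed.

Lemma lin_unit n p (w : 'cV[F]_n.+1) : (p < n.+1)%N -> lin (unitv n.+1 p) w = w (inord p) 0.
Proof.
move=> pn; rewrite /lin (bigD1 (inord p)) //= big1 ?addr0.
  by rewrite /unitv nth_mkseq ?inordK // eqxx mul1r.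
move=> k kp; rewrite /unitv nth_mkseq //.
case: eqP => [ek|]; last by rewrite mul0r.
by move: kp; rewrite -ek inord_val eqxx.
Qed.

Definition nWf : seq int := [:: 3; -1; -1; -1; -1; -1; -1; -1].
Definition nVf : seq int := [:: -1; -1; -1; -1; 1; 1; 1].

Lemma inW_aev (w : 'cV[F]_8) : inW w <-> aev 2 nWf w = 0.
Proof.
have e : aev 2 nWf w = 2 + 3 * w (inord 0) 0 - \sum_(1 <= k < 8) w (inord k) 0.
  rewrite /aev linE big_ltn // big_ltn // big_ltn // big_ltn // big_ltn //.
  rewrite big_ltn // big_ltn // big_geq // /=; ring.
rewrite /inW e; split => [->|H]; first by rewrite subrr.
by apply/eqP; rewrite -subr_eq0; apply/eqP.
Qed.

Lemma inV_aev (x : 'cV[F]_7) : inV x <-> aev (-1) nVf x = 0.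
Proof.
have e : aev (-1) nVf x = (c7 x 4 + c7 x 5 + c7 x 6 - c7 x 0 - c7 x 1 - c7 x 2 - c7 x 3) - 1.
  rewrite /aev linE /c7 /=; ring.
rewrite /inV e; split => [->|H]; first by rewrite subrr.
by apply/eqP; rewrite -subr_eq0; apply/eqP.
Qed.

Lemma trpE n i j : (i < n.+1)%N -> (j < n.+1)%N ->
  trp F n i j = mxl F n.+1 (Tl n.+1 i j).
Proof.
move=> hi hj; apply/matrixP => r c.
rewrite /trp tperm_mxEsub !mxE !nth_mkseq //.
rewrite /= perm.permE /= -!(inj_eq val_inj) /= !inordK //.
rewrite -pmulrn; case: (r == i :> nat) => /=; [|case: (r == j :> nat)] => /=;
  by rewrite -?(inj_eq val_inj) /= ?inordK.
Qed.

Lemma mxl_row n M (w : 'cV[F]_n) i : (mxl F n M *m w) i 0 = lin (nth [::] M i) w.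
Proof. by rewrite mxE /lin; apply: eq_bigr => k _; rewrite mxE. Qed.

Lemma mxlM' n A B : mxl F n.+1 A * mxl F n.+1 B = mxl F n.+1 (matmul n.+1 A B).
Proof. by rewrite -mxlM mulmxE. Qed.

Definition scl n (c : int) A := mkseq (fun i => vsc n c (nth [::] A i)) n.
Lemma mxl_scl n c A : mxl F n (scl n c A) = c%:~R *: mxl F n A.
Proof.
apply/matrixP => i j; rewrite !mxE /scl nth_mkseq // /vsc nth_mkseq //.
by rewrite intrM.
Qed.

Lemma aev_col n c f v :
  aev c f (\col_(i < n) ((v`_i)%:~R : F)) = (c + isum n (fun k => f`_k * v`_k))%:~R.
Proof.
rewrite /aev intrD isumE rmorph_sum /=; congr (_ + _).
by apply: eq_bigr => k _; rewrite mxE intrM.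
Qed.

Lemma lin_col n f P (j : 'I_n) :
  lin f (col j (mxl F n P)) = ((vecmat n f P)`_j)%:~R.
Proof.
rewrite /vecmat nth_mkseq // isumE rmorph_sum /=.
by apply: eq_bigr => k _; rewrite !mxE intrM.
Qed.

End Fld.

Definition pos (i : nat) : nat := nth 0%N [:: 1; 7; 6; 5; 4; 3; 2; 0]%N i.
Lemma pos_lt i : (pos i < 8)%N.
Proof. by case: i => [|[|[|[|[|[|[|[|i]]]]]]]] //; rewrite /pos /= nth_nil. Qed.

Definition laff (l : lab) : int * seq int :=
  let '(sg, i, j) := l in
  if sg then (0, vadd 8 (vadd 8 (unitv 8 (pos i)) (unitv 8 (pos j))) (vsc 8 (-1) (unitv 8 (pos 7))))
  else (1, vadd 8 (vsc 8 (-1) (vadd 8 (unitv 8 (pos i)) (unitv 8 (pos j)))) (unitv 8 (pos 7))).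

Definition labs : seq lab :=
  filter lab_ok [seq (p, j) | p <- [seq (sg, i) | sg <- [:: true; false], i <- iota 0 8], j <- iota 0 8].

Lemma labs_ok l : lab_ok l -> l \in labs.
Proof.
case: l => [[sg i] j] h; rewrite mem_filter h andTb.
move: h => /andP[ij j8].
apply/allpairsP; exists ((sg, i), j); split => //; last by rewrite mem_iota.
apply/allpairsP; exists (sg, i); split => //; first by case: sg.
by rewrite mem_iota /=; apply: ltn_trans ij j8.
Qed.

Lemma labs_ok' l : l \in labs -> lab_ok l.
Proof. by rewrite mem_filter => /andP[]. Qed.

Definition vals0 : seq int := [:: 0; 13; 21; -27; -3; -21; -7; 26].
Definition lval0 (l : lab) : int := (laff l).1 + isum 8 (fun k => (laff l).2`_k * vals0`_k).

Lemma lval0_inj : all (fun l1 => all (fun l2 => (lval0 l1 == lval0 l2) ==> (l1 == l2)) labs) labs.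
Proof. by vm_compute. Qed.

Section Lab.
Variable F : numClosedFieldType.

Definition w0 : 'cV[F]_8 := \col_(i < 8) ((vals0`_i)%:~R).

Lemma labval_aev l (w : 'cV[F]_8) : labval l w = aev (laff l).1 (laff l).2 w.
Proof.
case: l => [[sg i] j]; rewrite /labval /xc /aev.
case: sg => /=; rewrite !lin_add !lin_sc ?lin_add !lin_unit ?pos_lt // /pos /=; ring.
Qed.

Lemma w0W : inW w0.
Proof. by apply/inW_aev; rewrite /w0 aev_col; vm_compute. Qed.

Lemma lab_inj l1 l2 : lab_ok l1 -> lab_ok l2 -> labval l1 w0 = labval l2 w0 -> l1 = l2.
Proof.
move=> /labs_ok h1 /labs_ok h2; rewrite !labval_aev /w0 !aev_col => /intr_inj e.
move/allP: lval0_inj => /(_ _ h1) /allP /(_ _ h2).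
by rewrite /lval0 e eqxx => /eqP.
Qed.

End Lab.
Definition uLaff (bar : bool) (k : nat) : seq (int * seq int) :=
  match bar, k with
  | false, 1 => [:: (0, [:: 1; 0; 0; 0; 0; 0; 0]); (1, [:: 1; 0; 0; 0; (-1); 0; 0]); (1, [:: 1; 0; 0; 0; 0; (-1); 0]); (1, [:: 1; 0; 0; 0; 0; 0; (-1)]); (1, [:: 1; (-1); 0; 0; 0; 0; 0]); (1, [:: 1; 0; (-1); 0; 0; 0; 0]); (1, [:: 1; 0; 0; (-1); 0; 0; 0])]
  | false, 2 => [:: (0, [:: 1; 0; 0; 0; 0; 0; 0]); (1, [:: 1; 0; 0; 0; (-1); 0; 0]); (1, [:: 1; 0; 0; 0; 0; (-1); 0]); (1, [:: 1; 0; 0; 0; 0; 0; (-1)]); (1, [:: 1; 0; (-1); 0; 0; 0; 0]); (1, [:: 1; (-1); 0; 0; 0; 0; 0]); (1, [:: 1; 0; 0; (-1); 0; 0; 0])]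
  | false, 3 => [:: (0, [:: 1; 0; 0; 0; 0; 0; 0]); (1, [:: 1; 0; 0; 0; (-1); 0; 0]); (1, [:: 1; 0; 0; 0; 0; (-1); 0]); (1, [:: 1; 0; 0; 0; 0; 0; (-1)]); (1, [:: 1; 0; 0; (-1); 0; 0; 0]); (1, [:: 1; (-1); 0; 0; 0; 0; 0]); (1, [:: 1; 0; (-1); 0; 0; 0; 0])]
  | false, 4 => [:: (0, [:: 1; 0; 0; 0; 0; 0; 0]); (0, [:: 0; 1; 0; 0; 0; 0; 0]); (0, [:: 0; 0; 1; 0; 0; 0; 0]); (0, [:: 0; 0; 0; 1; 0; 0; 0]); (0, [:: 0; 0; 0; 0; 1; 0; 0]); (0, [:: 0; 0; 0; 0; 0; 1; 0]); (0, [:: 0; 0; 0; 0; 0; 0; 1])]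
  | false, 5 => [:: (0, [:: 1; 0; 0; 0; 0; 0; 0]); (0, [:: 0; 1; 0; 0; 0; 0; 0]); (0, [:: 0; 0; 1; 0; 0; 0; 0]); (0, [:: 0; 0; 0; 1; 0; 0; 0]); (0, [:: 0; 0; 0; 0; 0; 1; 0]); (0, [:: 0; 0; 0; 0; 1; 0; 0]); (0, [:: 0; 0; 0; 0; 0; 0; 1])]
  | false, 6 => [:: (0, [:: 1; 0; 0; 0; 0; 0; 0]); (0, [:: 0; 1; 0; 0; 0; 0; 0]); (0, [:: 0; 0; 1; 0; 0; 0; 0]); (0, [:: 0; 0; 0; 1; 0; 0; 0]); (0, [:: 0; 0; 0; 0; 0; 0; 1]); (0, [:: 0; 0; 0; 0; 0; 1; 0]); (0, [:: 0; 0; 0; 0; 1; 0; 0])]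
  | true, 1 => [:: (1, [:: (-1); 0; 0; 0; 0; 0; 0]); (0, [:: (-1); 0; 0; 0; 1; 0; 0]); (0, [:: (-1); 0; 0; 0; 0; 1; 0]); (0, [:: (-1); 0; 0; 0; 0; 0; 1]); (1, [:: (-1); 1; 0; 0; 0; 0; 0]); (1, [:: (-1); 0; 1; 0; 0; 0; 0]); (1, [:: (-1); 0; 0; 1; 0; 0; 0])]
  | true, 2 => [:: (1, [:: (-1); 0; 0; 0; 0; 0; 0]); (0, [:: (-1); 0; 0; 0; 1; 0; 0]); (0, [:: (-1); 0; 0; 0; 0; 1; 0]); (0, [:: (-1); 0; 0; 0; 0; 0; 1]); (1, [:: (-1); 0; 1; 0; 0; 0; 0]); (1, [:: (-1); 1; 0; 0; 0; 0; 0]); (1, [:: (-1); 0; 0; 1; 0; 0; 0])]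
  | true, 3 => [:: (1, [:: (-1); 0; 0; 0; 0; 0; 0]); (0, [:: (-1); 0; 0; 0; 1; 0; 0]); (0, [:: (-1); 0; 0; 0; 0; 1; 0]); (0, [:: (-1); 0; 0; 0; 0; 0; 1]); (1, [:: (-1); 0; 0; 1; 0; 0; 0]); (1, [:: (-1); 1; 0; 0; 0; 0; 0]); (1, [:: (-1); 0; 1; 0; 0; 0; 0])]
  | true, 4 => [:: (1, [:: (-1); 0; 0; 0; 0; 0; 0]); (1, [:: 0; (-1); 0; 0; 0; 0; 0]); (1, [:: 0; 0; (-1); 0; 0; 0; 0]); (1, [:: 0; 0; 0; (-1); 0; 0; 0]); (2, [:: 0; 0; 0; 0; (-1); 0; 0]); (2, [:: 0; 0; 0; 0; 0; (-1); 0]); (2, [:: 0; 0; 0; 0; 0; 0; (-1)])]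
  | true, 5 => [:: (1, [:: (-1); 0; 0; 0; 0; 0; 0]); (1, [:: 0; (-1); 0; 0; 0; 0; 0]); (1, [:: 0; 0; (-1); 0; 0; 0; 0]); (1, [:: 0; 0; 0; (-1); 0; 0; 0]); (2, [:: 0; 0; 0; 0; 0; (-1); 0]); (2, [:: 0; 0; 0; 0; (-1); 0; 0]); (2, [:: 0; 0; 0; 0; 0; 0; (-1)])]
  | true, 6 => [:: (1, [:: (-1); 0; 0; 0; 0; 0; 0]); (1, [:: 0; (-1); 0; 0; 0; 0; 0]); (1, [:: 0; 0; (-1); 0; 0; 0; 0]); (1, [:: 0; 0; 0; (-1); 0; 0; 0]); (2, [:: 0; 0; 0; 0; 0; 0; (-1)]); (2, [:: 0; 0; 0; 0; 0; (-1); 0]); (2, [:: 0; 0; 0; 0; (-1); 0; 0])]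
  | _, _ => [::]
  end.
Definition wH1 : seq (seq nat) := [:: [:: 5; 3; 2; 5; 4; 3; 1; 2; 5]; [:: 5; 3; 2; 5; 4; 3; 1; 2; 5; 1]; [:: 5; 3; 2; 5; 4; 3; 1; 2; 5; 1; 2]; [:: ]; [:: 3]; [:: 3; 4; 3]; [:: 0; 5; 4; 3; 2; 5; 4; 3; 2; 1; 0; 5; 4; 1; 0]; [:: 0; 5; 3; 2; 5; 4; 3; 1; 0; 5; 4; 1; 2; 0]; [:: 0; 5; 3; 2; 5; 4; 3; 1; 0; 5; 4; 1; 0]; [:: 2; 5; 3; 2; 0; 5; 4; 3; 2; 0; 5; 4; 3; 1; 2; 0; 5; 3; 4; 3; 1; 0]; [:: 2; 5; 3; 2; 0; 5; 4; 3; 2; 0; 5; 4; 3; 1; 2; 0; 5; 3; 4; 1; 0]; [:: 2; 5; 3; 2; 0; 5; 4; 3; 2; 0; 5; 4; 3; 1; 2; 0; 5; 1; 0]].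
Definition Pl : seq (seq int) := [:: [:: 0; 0; 0; 1; 0; 0; 0];
    [:: 0; 0; 0; 0; 1; 0; 0];
    [:: 0; 0; 0; 0; 0; 1; 0];
    [:: 0; 0; 0; 0; 0; 0; 1];
    [:: 1; 0; 0; 1; 1; 1; 1];
    [:: 0; 1; 0; 1; 1; 1; 1];
    [:: 0; 0; 1; 0; 0; 0; 0]].
Definition Pil : seq (seq int) := [:: [:: (-1); (-1); (-1); (-1); 1; 0; 0];
    [:: (-1); (-1); (-1); (-1); 0; 1; 0];
    [:: 0; 0; 0; 0; 0; 0; 1];
    [:: 1; 0; 0; 0; 0; 0; 0];
    [:: 0; 1; 0; 0; 0; 0; 0];
    [:: 0; 0; 1; 0; 0; 0; 0];
    [:: 0; 0; 0; 1; 0; 0; 0]].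
Definition wGL1 : seq (seq nat) := [:: [:: 2]; [:: 2]; [:: 2]; [:: 3]; [:: 3]; [:: 3]; [:: 2]; [:: 2]; [:: 2]; [:: 3]; [:: 3]; [:: 3]].
Definition wGL2 : seq (seq nat) := [:: [:: 1]; [:: 1]; [:: 1]; [:: ]; [:: ]; [:: 3]; [:: 1]; [:: 1]; [:: 1]; [:: ]; [:: ]; [:: 3]].
Definition wGL3 : seq (seq nat) := [:: [:: 1; 2; 4; 2; 1]; [:: 1; 2; 4; 2; 1]; [:: 4; 3; 2; 4; 3; 1; 2; 1]; [:: 2; 4; 3; 1; 2; 4; 3; 2]; [:: 3; 4; 3]; [:: 4]; [:: 1; 2; 4; 2; 1]; [:: 1; 2; 4; 2; 1]; [:: 4; 3; 2; 4; 3; 1; 2; 1]; [:: 2; 4; 3; 1; 2; 4; 3; 2]; [:: 3; 4; 3]; [:: 4]].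
Definition wGL4 : seq (seq nat) := [:: [:: 3]; [:: ]; [:: ]; [:: 2]; [:: 2]; [:: 2]; [:: 3]; [:: ]; [:: ]; [:: 2]; [:: 2]; [:: 2]].
Definition wGL5 : seq (seq nat) := [:: [:: ]; [:: ]; [:: 3]; [:: 1]; [:: 1]; [:: 1]; [:: ]; [:: ]; [:: 3]; [:: 1]; [:: 1]; [:: 1]].
Definition wGL6 : seq (seq nat) := [:: [:: 2; 4; 1; 2; 0; 4; 1; 0]; [:: 2; 4; 1; 2; 0; 4; 1; 0]; [:: 4; 3; 2; 0; 4; 3; 2; 0; 4]; [:: 0; 1; 2; 1; 0]; [:: 0; 1; 2; 1; 0]; [:: 0; 1; 2; 1; 0]; [:: 2; 4; 1; 2; 0; 4; 1; 0]; [:: 2; 4; 1; 2; 0; 4; 1; 0]; [:: 4; 3; 2; 0; 4; 3; 2; 0; 4]; [:: 0; 1; 2; 1; 0]; [:: 0; 1; 2; 1; 0]; [:: 0; 1; 2; 1; 0]].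
Definition Yl : seq (seq int) := [:: [:: (-1); 2; 0; 0; 0; 0; 0; 0];
    [:: (-1); 1; 1; 0; 0; 0; 0; 0];
    [:: 0; 1; 0; 0; 0; 0; 0; 0];
    [:: (-1); 1; 0; 1; 0; 0; 0; 0];
    [:: (-1); 1; 0; 0; 1; 0; 0; 0];
    [:: (-1); 1; 0; 0; 0; 1; 0; 0];
    [:: (-1); 1; 0; 0; 0; 0; 1; 0];
    [:: (-1); 1; 0; 0; 0; 0; 0; 1]].

Definition Xl : seq (seq int) :=
  [:: [::  1; 1;-1;-1;-1; 1; 1; 1];
      [::  0; 2; 0; 0; 0; 0; 0; 0];
      [:: -1; 1; 1;-1;-1; 1; 1; 1];
      [:: -1; 1;-1; 1;-1; 1; 1; 1];
      [:: -1; 1;-1;-1; 1; 1; 1; 1];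
      [::  0; 0; 0; 0; 0; 2; 0; 0];
      [::  0; 0; 0; 0; 0; 0; 2; 0];
      [::  0; 0; 0; 0; 0; 0; 0; 2]].
Definition X1l : seq (seq int) :=
  [:: [::  1; 0; 0; 0; 0; 0; 0];
      [::  0; 0;-1; 0; 1; 0; 0];
      [::  0;-1; 0; 0; 1; 0; 0];
      [::  0; 0; 0; 1; 0; 0; 0];
      [::  0; 0; 0; 0; 1; 0; 0];
      [::  0;-1;-1; 0; 1; 1; 0];
      [::  0;-1;-1; 0; 1; 0; 1]].

Definition S1l := matmul 8 Yl (Tl 8 1 2).
Definition QD : seq ((int * seq (seq int)) * (seq (seq int) * seq (seq nat))) :=
  [:: ((1, S1l), (Tl 7 5 6, wGL1)); ((1, Tl 8 2 3), (Tl 7 4 5, wGL2));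
      ((1, Tl 8 3 4), (X1l, wGL3)); ((1, Tl 8 4 5), (Tl 7 2 3, wGL4));
      ((1, Tl 8 5 6), (Tl 7 1 2, wGL5)); ((2, Xl), (Tl 7 0 3, wGL6))].
Definition GLl := [:: Tl 7 0 1; Tl 7 1 2; Tl 7 2 3; Tl 7 5 6;
                      matmul 7 (matmul 7 (Tl 7 4 6) X1l) (Tl 7 4 6)].
Definition H1l := [:: Tl 7 0 1; Tl 7 1 2; Tl 7 2 3; Tl 7 4 5; Tl 7 5 6; X1l].

Definition Bl (s : bool * nat) : seq (seq int) :=
  map (fun p => vadd 7 p.2 (vsc 7 p.1 nVf)) (uLaff s.1 s.2).
Definition sidx (s : bool * nat) : nat := (if s.1 then 6 else 0) + s.2.-1.
Definition sigs : seq (bool * nat) := [seq (b, k) | b <- [:: false; true], k <- iota 1 6].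
Definition trip32 : seq (nat * nat * bool) :=
  [seq (p, b) | p <- [seq (r, q) | r <- iota 0 4, q <- iota 0 4], b <- [:: true; false]].
Definition strJ (t : nat * nat * bool) : seq bool :=
  let '(r, q, sg) := t in
  if sg then bstr r ++ bstr q else map negb (bstr r ++ bstr q).
Definition jaff (t : nat * nat * bool) : int * seq int :=
  let '(r, q, sg) := t in
  if sg then (if q == 0%N then (0, unitv 7 r) else (1, vadd 7 (unitv 7 r) (vsc 7 (-1) (unitv 7 (q + 3)))))
  else (if q == 0%N then (1, vsc 7 (-1) (unitv 7 r)) else (0, vadd 7 (unitv 7 (q + 3)) (vsc 7 (-1) (unitv 7 r)))).
Definition wprod n (Sl : seq (seq (seq int))) (w : seq nat) : seq (seq int) :=
  foldr (fun i acc => matmul n (nth [::] Sl i) acc) (idl n) w.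

Definition lact d gl (l : lab) : lab :=
  head l [seq l2 <- labs | achk 8 nWf 2 1 d gl (laff l) (laff l2)].
Definition Jimg al (t : nat * nat * bool) :=
  head t [seq t2 <- trip32 | achk 7 nVf (-1) 4 1 al (jaff t) (jaff t2)].

Definition lstep d gl al (ws : seq (seq nat)) (l : lab) : bool :=
  let l2 := lact d gl l in
  [&& l2 \in labs, achk 8 nWf 2 1 d gl (laff l) (laff l2),
     inO1 l ==> inO1 l2, inO2 l ==> inO2 l2, inO3 l ==> inO3 l2 &
     match gamma1 l, gamma1 l2 with
     | inl s, inl s2 => [&& (1 <= s2.2 <= 6)%N,
          all (fun i => i < 5)%N (nth [::] ws (sidx s)) &
          matmul 7 (Bl s) al == matmul 7 (wprod 7 GLl (nth [::] ws (sidx s))) (Bl s2)]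
     | inr s, inr s2 => all (fun t => (s == strJ t) ==> let t2 := Jimg al t in
          [&& s2 == strJ t2, (t2.1.1 < 4)%N, (t2.1.2 < 4)%N &
              achk 7 nVf (-1) 4 1 al (jaff t) (jaff t2)]) trip32
     | _, _ => false end].

Definition gstep (t : (int * seq (seq int)) * (seq (seq int) * seq (seq nat))) : bool :=
  let '((d, gl), (al, ws)) := t in
  [&& matmul 8 gl gl == scl 8 (d * d) (idl 8),
     matmul 7 al al == idl 7,
     achk 8 nWf 2 1 d gl (2, nWf) (2, nWf),
     achk 7 nVf (-1) 4 1 al (-1, nVf) (-1, nVf) &
     all (lstep d gl al ws) labs].

Lemma QD_ok : all gstep QD.
Proof. vm_compute. reflexivity. Qed.

Lemma H1_ok : all (fun s => (Bl s == wprod 7 H1l (nth [::] wH1 (sidx s))) &&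
                            all (fun i => i < 6)%N (nth [::] wH1 (sidx s))) sigs
   && all (fun g => matmul 7 g g == idl 7) H1l
   && (matmul 7 Pl Pil == idl 7)
   && all (fun j => -1 + (vecmat 7 nVf Pl)`_j == 0) (iota 0 7).
Proof. vm_compute. reflexivity. Qed.


Section Main.
Variable F : numClosedFieldType.

Lemma gen_mul n (S : seq 'M[F]_n.+1) g h : gen S g -> gen S h -> gen S (g * h).
Proof.
elim=> [|x g' xS _ IH|x g' xS _ IH] hh; first by rewrite mul1r.
  by rewrite -mulrA; exact: genM xS (IH hh).
by rewrite -mulrA; exact: genV xS (IH hh).
Qed.

Lemma gen_unit n (S : seq 'M[F]_n.+1) g :
  (forall x, x \in S -> x \is a GRing.unit) -> gen S g -> g \is a GRing.unit.
Proof.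
move=> hS; elim=> [|x g' xS _ IH|x g' xS _ IH]; first exact: unitr1.
  by rewrite unitrMl // hS.
by rewrite unitrMl // unitrV hS.
Qed.

Lemma gen_word n Sl w : all (fun i => i < size Sl)%N w ->
  gen (map (mxl F n.+1) Sl) (mxl F n.+1 (wprod n.+1 Sl w)).
Proof.
elim: w => [|i w IH] /=; first by rewrite mxl_idl => _; apply: gen1.
move=> /andP[hi hw]; rewrite -mxlM' ; apply: genM; last exact: IH.
by rewrite (map_f (mxl F n.+1) (mem_nth [::] hi)).
Qed.

Lemma invol n (M : 'M[F]_n.+1) : M * M = 1 -> M \is a GRing.unit /\ M^-1 = M.
Proof.
move=> MM; have u : M \is a GRing.unit by apply/unitrP; exists M.
by split=> //; rewrite -[M^-1]mulr1 -MM mulrA mulVr // mul1r.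
Qed.

Lemma achkP1 n nf kap p M c f c2 f2 :
  achk n nf kap p 1 M (c, f) (c2, f2) ->
  forall w : 'cV[F]_n, aev kap nf w = 0 -> aev c f (mxl F n M *m w) = aev c2 f2 w.
Proof.
move=> h w hw; have := achkP (F:=F) (d:=1) isT h hw.
by rewrite mulr1z invr1 scale1r.
Qed.

Lemma mul_colE n (M P : 'M[F]_n) i j : (M *m col j P) i 0 = (M *m P) i j.
Proof. by rewrite !mxE; apply: eq_bigr => k _; rewrite !mxE. Qed.

Lemma H1_ok' : [/\ all (fun s => (Bl s == wprod 7 H1l (nth [::] wH1 (sidx s))) &&
                            all (fun i => i < 6)%N (nth [::] wH1 (sidx s))) sigs,
   all (fun g => matmul 7 g g == idl 7) H1l,
   (matmul 7 Pl Pil == idl 7) &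
   all (fun j => -1 + (vecmat 7 nVf Pl)`_j == 0) (iota 0 7)].
Proof.
case/andP: H1_ok => /andP[/andP[h1 h2] h3] h4.
split; [exact: h1 | exact: h2 | exact: h3 | exact: h4].
Qed.

Lemma spanV (M N : 'M[F]_7) :
  (forall x, inV x -> forall i : 'I_7, (M *m x) i 0 = (N *m x) i 0) -> M = N.
Proof.
move=> H; case: H1_ok' => _ _ /eqP hP /allP hc.
have eMP : M *m mxl F 7 Pl = N *m mxl F 7 Pl.
  apply/matrixP => i j; rewrite -!mul_colE; apply: H.
  apply/inV_aev; rewrite /aev lin_col -intrD.
  have hj : (j : nat) \in iota 0 7 by rewrite mem_iota /=.
  by move/eqP: (hc j hj) => ->.
have hP' : mxl F 7 Pl * mxl F 7 Pil = 1 by rewrite mxlM' hP mxl_idl.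
move: eMP; rewrite mulmxE => eMP.
by rewrite -[M]mulr1 -[N]mulr1 -hP' !mulrA eMP.
Qed.

Lemma H1list : [:: trp F 6 0 1; trp F 6 1 2; trp F 6 2 3; trp F 6 4 5; trp F 6 5 6; X1 F]
   = map (mxl F 7) H1l.
Proof. rewrite !trpE //; reflexivity. Qed.

Lemma GLlist : [:: trp F 6 0 1; trp F 6 1 2; trp F 6 2 3; trp F 6 5 6;
                   trp F 6 4 6 * X1 F * trp F 6 4 6] = map (mxl F 7) GLl.
Proof. rewrite !trpE // !mxlM'; reflexivity. Qed.

Lemma H1_unit (g : 'M[F]_7) : H1grp g -> g \is a GRing.unit.
Proof.
rewrite /H1grp H1list; apply: gen_unit => x /mapP [gl hg ->].
case: H1_ok' => _ /allP /(_ _ hg) /eqP e _ _.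
by case: (invol (M := mxl F 7 gl)); rewrite // mxlM' e mxl_idl.
Qed.


Lemma uL_aff b k (x : 'cV[F]_7) : (1 <= k <= 6)%N ->
  uL b k x = map (fun p => aev p.1 p.2 x) (uLaff b k).
Proof.
case: k => [|[|[|[|[|[|[|k]]]]]]] // _; case: b;
  rewrite /uL /aev /= !linE /c7 /=; congr [:: _; _; _; _; _; _; _]; ring.
Qed.


Lemma uLaff_size b k : (1 <= k <= 6)%N -> size (uLaff b k) = 7.
Proof. by case: k => [|[|[|[|[|[|[|k]]]]]]] // _; case: b. Qed.

Lemma linV (x : 'cV[F]_7) : inV x -> lin nVf x = 1.
Proof.
move/inV_aev; rewrite /aev => h.
by rewrite -[LHS](addKr ((-1)%:~R)) h addr0 mulrN1z opprK.
Qed.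

Lemma Bact s (x : 'cV[F]_7) : (1 <= s.2 <= 6)%N -> inV x ->
  forall i : 'I_7, (mxl F 7 (Bl s) *m x) i 0 = nth 0 (uL s.1 s.2 x) i.
Proof.
move=> hs hx i; rewrite mxl_row uL_aff //.
have sz := uLaff_size s.1 hs.
have hi : (i < size (uLaff s.1 s.2))%N by rewrite sz.
rewrite /Bl (nth_map (0, [::]) _ _ hi) (nth_map (0, [::]) _ _ hi).
case: (nth _ _ i) => c f /=; rewrite lin_add lin_sc linV // mulr1 /aev addrC.
done.
Qed.


Lemma sigs_mem b k : (1 <= k <= 6)%N -> (b, k) \in sigs.
Proof. by case: k => [|[|[|[|[|[|[|k]]]]]]] // _; case: b; vm_compute. Qed.

Lemma H1B s : (1 <= s.2 <= 6)%N -> H1grp (mxl F 7 (Bl s)).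
Proof.
case: s => b k /= hs; case: H1_ok' => /allP /(_ _ (sigs_mem b hs)) /andP[/eqP e hw] _ _ _.
by rewrite /H1grp H1list e; apply: gen_word.
Qed.

Lemma stepL (al : seq (seq int)) (w : seq nat) s s2 (delta : 'M[F]_7) :
  (1 <= s2.2 <= 6)%N -> all (fun i => i < 5)%N w ->
  matmul 7 (Bl s) al == matmul 7 (wprod 7 GLl w) (Bl s2) ->
  inGL delta s.1 s.2 -> inGL (delta * mxl F 7 al) s2.1 s2.2.
Proof.
move=> hs2 hw /eqP he [hs [beta [hb [hact hg]]]].
have eb : beta = mxl F 7 (Bl s).
  by apply: spanV => x hx i; rewrite hact // Bact.
have ub : beta \is a GRing.unit by apply: H1_unit.
have ub2 : mxl F 7 (Bl s2) \is a GRing.unit by apply/H1_unit/H1B.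
split => //; exists (mxl F 7 (Bl s2)); split; first exact: H1B.
split; first by move=> x hx i; apply: Bact.
have he' : beta * mxl F 7 al = mxl F 7 (wprod 7 GLl w) * mxl F 7 (Bl s2).
  by rewrite eb !mxlM' he.
rewrite -{1}(mulrVK ub delta) -(mulrA _ beta) he' mulrA mulrK //.
apply: gen_mul hg _; rewrite /GLgrp GLlist; exact: gen_word.
Qed.


Lemma achkP1' n nf kap p M cf cf2 :
  achk n nf kap p 1 M cf cf2 ->
  forall w : 'cV[F]_n, aev kap nf w = 0 -> aev cf.1 cf.2 (mxl F n M *m w) = aev cf2.1 cf2.2 w.
Proof. by case: cf cf2 => c f [c2 f2]; apply: achkP1. Qed.

Lemma jaffE r q (sg : bool) (x : 'cV[F]_7) : (r < 4)%N -> (q < 4)%N ->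
  (if sg then 1 + Acoord x r - Ecoord x q else Ecoord x q - Acoord x r) =
  aev (jaff (r, q, sg)).1 (jaff (r, q, sg)).2 x.
Proof.
move=> hr hq; rewrite /Acoord /Ecoord /c7 /jaff.
have hr' : (r < 7)%N by lia.
have hq' : (q + 3 < 7)%N by lia.
case: eqP => _; case: sg;
  rewrite /aev ?lin_add ?lin_sc ?lin_add ?lin_unit //; ring.
Qed.

Lemma trip_mem r q sg : (r < 4)%N -> (q < 4)%N -> (r, q, sg) \in trip32.
Proof.
move=> hr hq; apply/allpairsP; exists ((r, q), sg); split => //; last by case: sg.
by apply/allpairsP; exists (r, q); split; rewrite ?mem_iota //=.
Qed.

Lemma stepJ al s s2 (delta : 'M[F]_7) :
  (forall x, inV x -> inV (mxl F 7 al *m x)) ->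
  all (fun t => (s == strJ t) ==> let t2 := Jimg al t in
          [&& s2 == strJ t2, (t2.1.1 < 4)%N, (t2.1.2 < 4)%N &
              achk 7 nVf (-1) 4 1 al (jaff t) (jaff t2)]) trip32 ->
  inGJ delta s -> inGJ (delta * mxl F 7 al) s2.
Proof.
move=> hV hall [r [q [sg [hr hq hs hd]]]].
have hsq : s == strJ (r, q, sg) by rewrite hs.
move/allP: hall => /(_ _ (trip_mem sg hr hq)) /implyP /(_ hsq) /=.
case: (Jimg al (r, q, sg)) => [[r2 q2] sg2] /and4P [/eqP e2 h1 h2 hc].
exists r2, q2, sg2; split => // x hx.
have -> : (delta * mxl F 7 al) *m x = delta *m (mxl F 7 al *m x) by rewrite mulmxA.
rewrite hd; last exact: hV.
rewrite !jaffE //; apply: (achkP1' hc); exact/inV_aev.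
Qed.


Lemma achkP' n nf kap p d M cf cf2 :
  d != 0 -> achk n nf kap p d M cf cf2 ->
  forall w : 'cV[F]_n, aev kap nf w = 0 ->
  aev cf.1 cf.2 (((d%:~R)^-1 *: mxl F n M) *m w) = aev cf2.1 cf2.2 w.
Proof. by case: cf cf2 => c f [c2 f2]; apply: achkP. Qed.

Lemma QD_d : all (fun t => t.1.1 != 0) QD.
Proof. by vm_compute. Qed.

Lemma gen_props d gl al ws : ((d, gl), (al, ws)) \in QD ->
  [/\ ((d%:~R)^-1 *: mxl F 8 gl) * ((d%:~R)^-1 *: mxl F 8 gl) = 1,
      mxl F 7 al * mxl F 7 al = 1,
      (forall w, inW w -> inW (((d%:~R)^-1 *: mxl F 8 gl) *m w)) &
   forall l, l \in labs ->
     [/\ lact d gl l \in labs,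
         (forall w, inW w -> labval l (((d%:~R)^-1 *: mxl F 8 gl) *m w) = labval (lact d gl l) w),
         [/\ (inO1 l -> inO1 (lact d gl l)), (inO2 l -> inO2 (lact d gl l)) &
           (inO3 l -> inO3 (lact d gl l))] &
         forall delta, inT delta (gamma1 l) -> inT (delta * mxl F 7 al) (gamma1 (lact d gl l))]].
Proof.
move=> hq; have /allP /(_ _ hq) := QD_ok; rewrite /gstep => /and5P [h1 h2 h3 h4 h5].
have /allP /(_ _ hq) /= d0 := QD_d.
have dF : (d%:~R : F) != 0 by rewrite intr_eq0.
have hV : forall x, inV x -> inV (mxl F 7 al *m x).
  by move=> x hx; apply/inV_aev; rewrite (achkP1' h4) //; apply/inV_aev.
split.
- rewrite -scalerAl -scalerAr scalerA mxlM' (eqP h1) mxl_scl mxl_idl scalerA.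
  have -> : (d%:~R)^-1 * (d%:~R)^-1 * (d * d)%:~R = 1 :> F.
    by rewrite intrM; field.
  by rewrite scale1r.
- by rewrite mxlM' (eqP h2) mxl_idl.
- move=> w hw; apply/inW_aev; rewrite (achkP' d0 h3); exact/inW_aev.
move=> l hl; move/allP: h5 => /(_ _ hl); rewrite /lstep => /and5P [c1 c2 c3 c4 /andP [c5 c6]].
split => //.
- by move=> w hw; rewrite !labval_aev (achkP' d0 c2) //; apply/inW_aev.
- by split; exact/implyP.
move: c6; case: (gamma1 l) => [s|s]; case: (gamma1 (lact d gl l)) => [s2|s2] //.
  case: s => b k; case: s2 => b2 k2 /and3P [a1 a2 a3] delta H.
  exact: (stepL (s := (b, k)) (s2 := (b2, k2)) a1 a2 a3 H).
by move=> hall delta H; apply: stepJ hall H.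
Qed.


Lemma mul1mx' n (w : 'cV[F]_n.+1) : (1 : 'M[F]_n.+1) *m w = w.
Proof. exact: mul1mx. Qed.

Definition Qlist := [:: s1 F; s2 F; s3 F; s4 F; s5 F; s3' F].

Lemma Qgens (m : 'M[F]_8 -> 'M[F]_7) x :
  m (s1 F) = a5 F -> m (s2 F) = a4 F -> m (s3 F) = a3 F ->
  m (s4 F) = a2 F -> m (s5 F) = a1 F -> m (s3' F) = a1' F ->
  x \in Qlist -> exists d gl al ws, [/\ ((d, gl), (al, ws)) \in QD,
     x = (d%:~R)^-1 *: mxl F 8 gl & m x = mxl F 7 al].
Proof.
move=> e1 e2 e3 e4 e5 e6; rewrite /Qlist !inE.
have E1 : forall M : 'M[F]_8, M = ((1:int)%:~R)^-1 *: M by move=> M; rewrite mulr1z invr1 scale1r.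
case/orP => [/eqP ->|].
  exists 1, S1l, (Tl 7 5 6), wGL1; split; first by vm_compute.
  by rewrite -E1 /s1 /Ym trpE // mxlM'.
  by rewrite e1 /a5 trpE.
case/orP => [/eqP ->|].
  exists 1, (Tl 8 2 3), (Tl 7 4 5), wGL2; split; first by vm_compute.
  by rewrite -E1 /s2 trpE.
  by rewrite e2 /a4 trpE.
case/orP => [/eqP ->|].
  exists 1, (Tl 8 3 4), X1l, wGL3; split; first by vm_compute.
  by rewrite -E1 /s3 trpE.
  by rewrite e3.
case/orP => [/eqP ->|].
  exists 1, (Tl 8 4 5), (Tl 7 2 3), wGL4; split; first by vm_compute.
  by rewrite -E1 /s4 trpE.
  by rewrite e4 /a2 trpE.
case/orP => [/eqP ->|].
  exists 1, (Tl 8 5 6), (Tl 7 1 2), wGL5; split; first by vm_compute.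
  by rewrite -E1 /s5 trpE.
  by rewrite e5 /a1 trpE.
move/eqP ->; exists 2, Xl, (Tl 7 0 3), wGL6; split; first by vm_compute.
  by [].
by rewrite e6 /a1' trpE.
Qed.


Definition QP (m : 'M[F]_8 -> 'M[F]_7) (alpha : 'M[F]_8) : Prop :=
  [/\ alpha \is a GRing.unit, m alpha \is a GRing.unit,
   (forall w, inW w -> inW (alpha^-1 *m w)) &
   forall l, l \in labs -> exists l2, [/\ l2 \in labs,
     (forall w, inW w -> labval l (alpha^-1 *m w) = labval l2 w),
     [/\ (inO1 l -> inO1 l2), (inO2 l -> inO2 l2) & (inO3 l -> inO3 l2)] &
     forall delta, inT delta (gamma1 l) -> inT (delta * (m alpha)^-1) (gamma1 l2)]].

Lemma Qstep (m : 'M[F]_8 -> 'M[F]_7) x g :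
  (forall a b, Qgrp a -> Qgrp b -> m (a * b) = m a * m b) ->
  m (s1 F) = a5 F -> m (s2 F) = a4 F -> m (s3 F) = a3 F ->
  m (s4 F) = a2 F -> m (s5 F) = a1 F -> m (s3' F) = a1' F ->
  x \in Qlist -> Qgrp g -> QP m g -> QP m (x * g).
Proof.
move=> hm e1 e2 e3 e4 e5 e6 hx hg [ug umg hWg hlg].
have Qx : Qgrp x by rewrite -[x]mulr1; apply: genM => //; apply: gen1.
have [d [gl [al [ws [hq ex emx]]]]] := Qgens e1 e2 e3 e4 e5 e6 hx.
have [XX AA XW Hl] := gen_props hq.
rewrite -ex in XX XW Hl; rewrite -emx in AA.
have [ux vx] := invol XX; have [ua va] := invol AA.
have emg : m (x * g) = m x * m g by apply: hm.
have ei : (x * g)^-1 = g^-1 * x by rewrite invrM // vx.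
have eim : (m (x * g))^-1 = (m g)^-1 * m x by rewrite emg invrM // va.
have ew : forall w : 'cV[F]_8, (x * g)^-1 *m w = g^-1 *m (x *m w).
  by move=> w; rewrite ei mulmxA.
split.
- by rewrite unitrMl.
- by rewrite emg unitrMl.
- by move=> w hw; rewrite ew; apply/hWg/XW.
move=> l hl; have [l1 [hl1 hv1 ho1 hd1]] := hlg l hl.
have [hl2 hv2 [o1 o2 o3] hd2] := Hl l1 hl1.
exists (lact d gl l1); split => //.
- by move=> w hw; rewrite ew hv1 ?hv2 //; apply: XW.
- by case: ho1 => p1 p2 p3; split => h; [apply/o1/p1 | apply/o2/p2 | apply/o3/p3].
- move=> delta hd; rewrite eim mulrA emx; apply: hd2; exact: hd1.
Qed.

Lemma Qind (m : 'M[F]_8 -> 'M[F]_7) alpha :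
  (forall a b, Qgrp a -> Qgrp b -> m (a * b) = m a * m b) ->
  m (s1 F) = a5 F -> m (s2 F) = a4 F -> m (s3 F) = a3 F ->
  m (s4 F) = a2 F -> m (s5 F) = a1 F -> m (s3' F) = a1' F ->
  Qgrp alpha -> QP m alpha.
Proof.
move=> hm e1 e2 e3 e4 e5 e6.
have s2Q : s2 F \in Qlist by rewrite /Qlist !inE eqxx orbT.
have [d [gl [al [ws [hq ex emx]]]]] := Qgens e1 e2 e3 e4 e5 e6 s2Q.
have [XX AA _ _] := gen_props hq.
rewrite -ex in XX; rewrite -emx in AA.
have Qs2 : Qgrp (s2 F) by rewrite -[s2 F]mulr1; apply: genM => //; apply: gen1.
have m1 : m 1 = 1 by rewrite -XX hm.
elim.
- split; [exact: unitr1 | by rewrite m1 unitr1 | by move=> w; rewrite invr1 mul1mx' |].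
  move=> l hl; exists l; split => //; first by move=> w _; rewrite invr1 mul1mx'.
  by move=> delta; rewrite m1 invr1 mulr1.
- by move=> x g hx hg; apply: Qstep.
move=> x g hx hg IH.
have [d' [gl' [al' [ws' [hq' ex' _]]]]] := Qgens e1 e2 e3 e4 e5 e6 hx.
have [XX' _ _ _] := gen_props hq'; rewrite -ex' in XX'.
have [_ ->] := invol XX'.
exact: Qstep.
Qed.

End Main.

Definition witL (o : lab -> bool) (t : bool * nat) : lab :=
  head (true, 0%N, 0%N) [seq l <- labs | o l && (gamma1 l == inl t)].
Definition witJ (s : seq bool) : lab :=
  head (true, 0%N, 0%N) [seq l <- labs | inO3 l && (gamma1 l == inr s)].
Fixpoint bseqs (n : nat) : seq (seq bool) :=
  if n is n'.+1 then [seq b :: s | b <- [:: true; false], s <- bseqs n'] else [:: [::]].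

Lemma bseqs_mem s : s \in bseqs (size s).
Proof.
elim: s => [|b s IH] //.
have -> : bseqs (size (b :: s)) = [seq b :: s | b <- [:: true; false], s <- bseqs (size s)] by [].
by apply/allpairsP; exists (b, s); split => //; case: b.
Qed.

Definition chkL (o : lab -> bool) : bool :=
  all (fun l => o l ==> (if gamma1 l is inl t then validL t else false)) labs &&
  all (fun t => let w := witL o t in
     [&& w \in labs, o w, gamma1 w == inl t &
         all (fun l => (o l && (gamma1 l == inl t)) ==> (l == w)) labs]) sigs.
Definition chkJ : bool :=
  all (fun l => inO3 l ==> (if gamma1 l is inr s then validJ s else false)) labs &&
  all (fun s => validJ s ==> let w := witJ s in
     [&& w \in labs, inO3 w, gamma1 w == inr s &
         all (fun l => (inO3 l && (gamma1 l == inr s)) ==> (l == w)) labs]) (bseqs 6).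

Lemma chk_ok : [&& chkL inO1, chkL inO2 & chkJ].
Proof. by vm_compute. Qed.

Lemma partL (o : lab -> bool) : chkL o ->
  (forall l, lab_ok l -> o l -> exists t, validL t /\ gamma1 l = inl t)
  /\ (forall t, validL t -> exists! l, [/\ lab_ok l, o l & gamma1 l = inl t]).
Proof.
case/andP => /allP h1 /allP h2; split.
  move=> l /labs_ok hl ho; move: (h1 l hl); rewrite ho /=.
  by case: (gamma1 l) => // t ht; exists t.
case=> b k hv; have := h2 _ (sigs_mem b hv).
case/and4P => hw ow /eqP gw /allP hu.
exists (witL o (b, k)); split; first by split => //; exact: labs_ok'.
move=> l [hl ol gl]; apply/esym/eqP; move: (hu l (labs_ok hl)).
by rewrite ol gl eqxx.
Qed.

Lemma partJ : chkJ ->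
  (forall l, lab_ok l -> inO3 l -> exists s, validJ s /\ gamma1 l = inr s)
  /\ (forall s, validJ s -> exists! l, [/\ lab_ok l, inO3 l & gamma1 l = inr s]).
Proof.
case/andP => /allP h1 /allP h2; split.
  move=> l /labs_ok hl ho; move: (h1 l hl); rewrite ho /=.
  by case: (gamma1 l) => // s hs; exists s.
move=> s hv; have hs : s \in bseqs 6.
  by case/andP: hv => /eqP <- _; apply: bseqs_mem.
move: (h2 _ hs); rewrite hv implyTb.
case/and4P => hw ow /eqP gw /allP hu.
exists (witJ s); split; first by split => //; exact: labs_ok'.
move=> l [hl ol gl]; apply/esym/eqP; move: (hu l (labs_ok hl)).
by rewrite ol gl eqxx.
Qed.

Unset Implicit Arguments.

Theorem theorem5p5 (F : numClosedFieldType) (m : 'M[F]_8 -> 'M[F]_7) :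
  (forall a b, Qgrp a -> Qgrp b -> m (a * b) = m a * m b) ->
  m (s1 F) = a5 F -> m (s2 F) = a4 F -> m (s3 F) = a3 F ->
  m (s4 F) = a2 F -> m (s5 F) = a1 F -> m (s3' F) = a1' F ->
  (* gamma1 (alpha . tau) = m(alpha) . gamma1(tau) *)
  (forall (alpha beta : 'M[F]_8) (l l' : lab) (delta : 'M[F]_7),
      Qgrp alpha -> Hgrp beta -> labG beta l -> labG (beta * alpha^-1) l' ->
      H1grp delta -> inT delta (gamma1 l) ->
      inT (delta * (m alpha)^-1) (gamma1 l'))
  /\ (* Q preserves O1, O2, O3 *)
  (forall (alpha beta : 'M[F]_8) (l l' : lab),
      Qgrp alpha -> Hgrp beta -> labG beta l -> labG (beta * alpha^-1) l' ->
      [/\ inO1 l -> inO1 l', inO2 l -> inO2 l' & inO3 l -> inO3 l'])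
  /\ (* gamma1 is a bijection O1 -> G_L\H1, O2 -> G_L\H1, O3 -> G_J\H1 *)
  (forall l, lab_ok l -> inO1 l ->
      exists t, validL t /\ gamma1 l = inl t)
  /\ (forall t, validL t -> exists! l, [/\ lab_ok l, inO1 l & gamma1 l = inl t])
  /\ (forall l, lab_ok l -> inO2 l ->
      exists t, validL t /\ gamma1 l = inl t)
  /\ (forall t, validL t -> exists! l, [/\ lab_ok l, inO2 l & gamma1 l = inl t])
  /\ (forall l, lab_ok l -> inO3 l ->
      exists s, validJ s /\ gamma1 l = inr s)
  /\ (forall s, validJ s -> exists! l, [/\ lab_ok l, inO3 l & gamma1 l = inr s]).
Proof.
move=> hm e1 e2 e3 e4 e5 e6.
have key : forall (alpha beta : 'M[F]_8) (l l' : lab), Qgrp alpha ->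
    labG beta l -> labG (beta * alpha^-1) l' ->
    [/\ [/\ inO1 l -> inO1 l', inO2 l -> inO2 l' & inO3 l -> inO3 l'] &
        forall delta, inT delta (gamma1 l) -> inT (delta * (m alpha)^-1) (gamma1 l')].
  move=> alpha beta l l' hQ [okl hb] [okl' hb'].
  have [_ _ hW hl] := Qind hm e1 e2 e3 e4 e5 e6 hQ.
  have [l2 [hl2 hv2 ho2 hd2]] := hl l (labs_ok okl).
  suff -> : l' = l2 by split.
  apply: (lab_inj (F := F)) => //; first exact: labs_ok'.
  rewrite -hb'; last exact: w0W.
  rewrite -hv2; last exact: w0W.
  by rewrite -hb; [rewrite mulmxA | apply/hW/w0W].
case/and3P: chk_ok => /partL [p3 p4] /partL [p5 p6] /partJ [p7 p8].
split.
  move=> alpha beta l l' delta hQ _ hb hb' _ hd.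
  by have [_ hk] := key _ _ _ _ hQ hb hb'; apply: hk.
split.
  by move=> alpha beta l l' hQ _ hb hb'; have [hk _] := key _ _ _ _ hQ hb hb'.
by do !split.
Qed.
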